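(* There is an algorithm that, given strings $A,B$ and a common supersequence $S$ of $A$ and $B$, computes a minimal common supersequence $S'$ of $A$ and $B$ with $S'\subseteq S$ in $O(|S|+|A|+|B|)$ time.
   Context: $X\subseteq S$ means $X$ is a (not necessarily contiguous) subsequence of $S$. A common supersequence of $A$ and $B$ is a string $C$ with $A\subseteq C$ and $B\subseteq C$; it is minimal if no proper subsequence of $C$ is a common supersequence of $A$ and $B$. Time is measured in the standard RAM model with $O(1)$-time character comparisons. *)

(* Defs.v *)
From mathcomp Require Import all_boot.
Set Implicit Arguments. Unset Strict Implicit. Unset Printing Implicit Defensive.

(* Strings are sequences of characters; characters are natural numbers
   (an integer alphabet), compared in O(1) time by the machine below.
   X ⊆ S  is  [subseq X S]  from MathComp (not necessarily contiguous). *)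

Definition common_supersequence (A B C : seq nat) : bool :=
  subseq A C && subseq B C.

Definition minimal_common_supersequence (A B C : seq nat) : Prop :=
  common_supersequence A B C /\
  forall X : seq nat, subseq X C -> X != C -> ~~ common_supersequence A B X.

(* Registers and memory cells hold natural numbers; registers and memory are
   indexed by natural numbers.  Every instruction costs one time unit. *)
Inductive instr : Type :=
| IConst (d n : nat)
| IAdd (d a b : nat)
| ISub (d a b : nat)       (* r[d] := r[a] - r[b] (truncated)  *)
| IEq (d a b : nat)
| ILt (d a b : nat)
| ILoad (d a : nat)
| IStore (a b : nat)
| IJz (a t : nat)
| IJmp (t : nat)
| IHalt.

Record state : Type := State { pc : nat; regs : nat -> nat; memory : nat -> nat }.

Definition upd (f : nat -> nat) (i v : nat) : nat -> nat :=
  fun j => if j == i then v else f j.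

(* Fetch; a program counter outside the program means Halt. *)
Definition fetch (p : seq instr) (s : state) : instr := nth IHalt p (pc s).

Definition halted (p : seq instr) (s : state) : bool :=
  if fetch p s is IHalt then true else false.

Definition step (p : seq instr) (s : state) : state :=
  let r := regs s in let m := memory s in let n := (pc s).+1 in
  match fetch p s with
  | IConst d k => State n (upd r d k) m
  | IAdd d a b => State n (upd r d (r a + r b)) m
  | ISub d a b => State n (upd r d (r a - r b)) m
  | IEq d a b => State n (upd r d (nat_of_bool (r a == r b))) m
  | ILt d a b => State n (upd r d (nat_of_bool (r a < r b))) m
  | ILoad d a => State n (upd r d (m (r a))) m
  | IStore a b => State n r (upd m (r a) (r b))
  | IJz a t => State (if r a == 0 then t else n) r m
  | IJmp t => State t r m
  | IHalt => s
  end.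

Definition init_mem (A B S : seq nat) : nat -> nat :=
  fun i => if i == 0 then size A else if i == 1 then size B
           else if i == 2 then size S else nth 0 (A ++ B ++ S) (i - 3).

Definition init_state (A B S : seq nat) : state :=
  State 0 (fun _ => 0) (init_mem A B S).

Definition output (m : nat -> nat) : seq nat := mkseq (fun i => m i.+1) (m 0).

(* Main.v *)
Require Import Defs.
From mathcomp Require Import all_boot.
From mathcomp Require Import zify.
Set Implicit Arguments. Unset Strict Implicit. Unset Printing Implicit Defensive.

Fixpoint gp (X P : seq nat) : nat :=
  match P with
  | [::] => 0
  | c :: P' => match X with
               | [::] => 0
               | x :: X' => if x == c then (gp X' P').+1 else gp X P'
               end
  end.

Lemma gp_le X P : gp X P <= size X.
Proof.
elim: P X => [|c P IH] [|x X] //=.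
case: eqP => _; [exact: IH|exact: (IH (x :: X))].
Qed.

Lemma gp_take X P k : k <= size X -> subseq (take k X) P = (k <= gp X P).
Proof.
elim: P X k => [|c P IH] X k.
  by case: X => [|x X]; case: k.
case: X => [|x X] /=; first by case: k.
case: k => [|k] /=; first by [].
move=> Hk; case: ifP => Hxc; first by rewrite IH.
by have /= := IH (x :: X) k.+1 Hk.
Qed.

Lemma gp_rcons X P c :
  gp X (rcons P c) = gp X P + ((gp X P < size X) && (nth 0 X (gp X P) == c)).
Proof.
elim: P X => [|d P IH] [|x X] //=.
by case: (x == d); rewrite IH.
Qed.

Definition gs (X T : seq nat) := gp (rev X) (rev T).

Lemma gs_le X T : gs X T <= size X.
Proof. by rewrite /gs -(size_rev X) gp_le. Qed.

Lemma gs_drop X T k : k <= size X -> subseq (drop (size X - k) X) T = (k <= gs X T).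
Proof.
move=> Hk; rewrite -subseq_rev -take_rev /gs gp_take // size_rev //.
Qed.

Lemma gs_cons X T c :
  gs X (c :: T) = gs X T + ((gs X T < size X) &&
                             (nth 0 X (size X - (gs X T).+1) == c)).
Proof.
rewrite /gs rev_cons gp_rcons size_rev.
case H: (gp (rev X) (rev T) < size X) => //=.
by rewrite nth_rev.
Qed.

Lemma subseq_split (X P T : seq nat) :
  subseq X (P ++ T) -> exists k, subseq (take k X) P /\ subseq (drop k X) T.
Proof.
elim: P X => [|c P IH] X.
  by move=> H; exists 0; rewrite take0 drop0 sub0seq.
case: X => [|x X].
  by move=> _; exists 0; rewrite !sub0seq.
rewrite cat_cons [subseq _ _]/=.
case: ifP => Hxc H.
  have [k [H1 H2]] := IH _ H.
  by exists k.+1; rewrite [take _ _]/= [drop _ _]/= [subseq _ _]/= Hxc.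
have [k [H1 H2]] := IH _ H.
exists k; split => //.
exact: subseq_trans H1 (subseq_cons _ _).
Qed.

Lemma subseq_catE (X P T : seq nat) : subseq X (P ++ T) = (size X <= gp X P + gs X T).
Proof.
apply/idP/idP.
  move=> /subseq_split [k [H1 H2]].
  case: (leqP (size X) k) => Hk.
    move: H1; rewrite take_oversize // => H1.
    have := gp_take P (leqnn (size X)); rewrite take_size H1 => /esym H.
    by apply: leq_trans (leq_addr _ _); rewrite H.
  have Hg : k <= gp X P by rewrite -gp_take // ltnW.
  have Hs : size X - k <= gs X T.
    by rewrite -gs_drop ?leq_subr // subKn // ltnW.
  lia.
move=> H.
have Hg := gp_le X P.
rewrite -(cat_take_drop (gp X P) X).
apply: cat_subseq; first by rewrite gp_take.
have -> : gp X P = size X - (size X - gp X P) by rewrite subKn.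
rewrite gs_drop ?leq_subr //; lia.
Qed.

Definition stepA A B (P : seq nat) (c : nat) (T' : seq nat) :=
  if common_supersequence A B (P ++ T') then P else rcons P c.

Fixpoint alg A B P T :=
  match T with [::] => P | c :: T' => alg A B (stepA A B P c T') T' end.

Fixpoint pref A B P T k {struct k} : seq nat :=
  match k with
  | 0 => P
  | k'.+1 => match T with [::] => P | c :: T' => pref A B (stepA A B P c T') T' k' end
  end.

Lemma pref_size A B P T : pref A B P T (size T) = alg A B P T.
Proof. by elim: T P => [|c T IH] P //=. Qed.

Lemma pref_S A B P T k : k < size T ->
  pref A B P T k.+1 = stepA A B (pref A B P T k) (nth 0 T k) (drop k.+1 T).
Proof.
elim: T P k => [|c T IH] P [|k] //= Hk.
  by rewrite drop0.
exact: IH.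
Qed.

Lemma alg_pref A B P T : exists K, alg A B P T = P ++ K /\ subseq K T.
Proof.
elim: T P => [|c T IH] P /=; first by exists [::]; rewrite cats0.
have [K [-> HK]] := IH (stepA A B P c T).
rewrite /stepA; case: ifP => _.
  by exists K; split => //; apply: subseq_trans HK (subseq_cons _ _).
by exists (c :: K); rewrite -cats1 -catA /= eqxx.
Qed.

Lemma cs_mono A B X Y : subseq X Y -> common_supersequence A B X ->
  common_supersequence A B Y.
Proof.
move=> H /andP [H1 H2]; apply/andP; split; exact: subseq_trans H.
Qed.

Lemma alg_cs A B P T : common_supersequence A B (P ++ T) ->
  common_supersequence A B (alg A B P T).
Proof.
elim: T P => [|c T IH] P /=; first by rewrite cats0.
rewrite /stepA; case: ifP => H1 H2; apply: IH => //.
by rewrite cat_rcons.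
Qed.

Lemma alg_min A B P T C1 c C2 : alg A B P T = C1 ++ c :: C2 ->
  size P <= size C1 -> ~~ common_supersequence A B (C1 ++ C2).
Proof.
elim: T P => [|d T IH] P /=.
  by move=> -> ; rewrite size_cat /=; lia.
rewrite {1}/stepA; case: ifP => Hcs.
  by move=> H Hs; apply: IH H Hs.
move=> H Hs.
case: (ltnP (size P) (size C1)) => Hlt.
  by apply: IH H _; rewrite size_rcons.
have [K [HK HKT]] := alg_pref A B (rcons P d) T.
move: H; rewrite HK -cats1 -catA /= => H.
have Hsz : size C1 = size P by apply/eqP; rewrite eqn_leq Hs Hlt.
have := congr1 (take (size P)) H; rewrite !take_size_cat // => HP.
have := congr1 (drop (size P)) H; rewrite !drop_size_cat // => [[Hc HC2]].
subst; apply/negP => Hcs2; move/negP: Hcs; apply.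
apply: cs_mono Hcs2.
by rewrite subseq_cat2l.
Qed.

Lemma del1 (X C : seq nat) : subseq X C -> X != C ->
  exists C1 c C2, C = C1 ++ c :: C2 /\ subseq X (C1 ++ C2).
Proof.
elim: C X => [|c C IH] [|x X] //=.
  by move=> _ _; exists [::], c, C; split => //; rewrite sub0seq.
case: eqP => [->|Hne] H Hne2.
  have Hn : X != C by apply: contraNneq Hne2 => ->.
  have [C1 [c' [C2 [E HX]]]] := IH _ H Hn.
  by exists (c :: C1), c', C2; rewrite E /= eqxx.
by exists [::], c, C.
Qed.

Lemma alg_correct A B S : subseq A S -> subseq B S ->
  minimal_common_supersequence A B (alg A B [::] S) /\ subseq (alg A B [::] S) S.
Proof.
move=> HA HB.
have [K [HK HKS]] := alg_pref A B [::] S.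
split; last by rewrite HK.
split.
  by apply: alg_cs; rewrite /= /common_supersequence HA HB.
move=> X HX Hne; have [C1 [c [C2 [E HX2]]]] := del1 HX Hne.
apply/negP => Hcs.
have := alg_min (P := [::]) (T := S) (A := A) (B := B) (C1 := C1) (c := c) (C2 := C2).
move=> /(_ E isT) /negP; apply.
exact: cs_mono HX2 Hcs.
Qed.
Definition prog : seq instr := [::
 (*0*) IConst 7 1; IConst 12 0; ILoad 1 12; ILoad 2 7; IConst 13 2;
 (*5*) ILoad 3 13; IConst 13 3; IAdd 16 13 1; IAdd 17 16 2; IAdd 4 17 3;
 (*10*) IAdd 5 4 3; IAdd 5 5 7; IAdd 6 5 3; IAdd 6 6 7; IAdd 8 3 0;
 (*15*) IConst 9 0; IConst 10 0; IJz 8 42; ISub 8 8 7; IAdd 12 17 8;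
 (*20*) ILoad 13 12; ILt 14 9 1; IJz 14 29; ISub 12 16 7; ISub 12 12 9;
 (*25*) ILoad 15 12; IEq 14 15 13; IJz 14 29; IAdd 9 9 7; ILt 14 10 2;
 (*30*) IJz 14 37; ISub 12 17 7; ISub 12 12 10; ILoad 15 12; IEq 14 15 13;
 (*35*) IJz 14 37; IAdd 10 10 7; IAdd 12 4 8; IStore 12 9; IAdd 12 5 8;
 (*40*) IStore 12 10; IJmp 17; IConst 8 0; IConst 9 0; IConst 10 0;
 (*45*) IConst 11 0; ILt 14 8 3; IJz 14 83; IAdd 12 4 8; IAdd 12 12 7;
 (*50*) ILoad 13 12; IAdd 13 13 9; ILt 14 13 1; IJz 14 55; IJmp 61;
 (*55*) IAdd 12 5 8; IAdd 12 12 7; ILoad 13 12; IAdd 13 13 10; ILt 14 13 2;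
 (*60*) IJz 14 81; IAdd 12 17 8; ILoad 13 12; IAdd 12 6 11; IStore 12 13;
 (*65*) IAdd 11 11 7; ILt 14 9 1; IJz 14 74; IConst 15 3; IAdd 12 15 9;
 (*70*) ILoad 15 12; IEq 14 15 13; IJz 14 74; IAdd 9 9 7; ILt 14 10 2;
 (*75*) IJz 14 81; IAdd 12 16 10; ILoad 15 12; IEq 14 15 13; IJz 14 81;
 (*80*) IAdd 10 10 7; IAdd 8 8 7; IJmp 46; IConst 8 0; ILt 14 8 11;
 (*85*) IJz 14 92; IAdd 12 6 8; ILoad 13 12; IAdd 12 8 7; IStore 12 13;
 (*90*) IAdd 8 8 7; IJmp 84; IConst 12 0; IStore 12 11; IHalt ].

Definition Run (s : state) (K : nat) (Q : state -> Prop) :=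
  exists n, n <= K /\ Q (iter n (step prog) s).

Lemma stepR s K Q : Run (step prog s) K Q -> Run s K.+1 Q.
Proof. by case=> n [Hn HQ]; exists n.+1; rewrite iterSr. Qed.

Lemma doneR s K Q : Q s -> Run s K Q.
Proof. by move=> HQ; exists 0. Qed.

Lemma weakR s K K' Q : K <= K' -> Run s K Q -> Run s K' Q.
Proof. by move=> H [n [Hn HQ]]; exists n; split => //; apply: leq_trans H. Qed.

Lemma seqR s K1 K2 Q1 Q2 : Run s K1 Q1 -> (forall s', Q1 s' -> Run s' K2 Q2) ->
  Run s (K1 + K2) Q2.
Proof.
case=> n1 [H1 HQ1] H; have [n2 [H2 HQ2]] := H _ HQ1.
by exists (n2 + n1); rewrite iterD; split => //; rewrite addnC; apply: leq_add.
Qed.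

Lemma updE (f : nat -> nat) i v j : upd f i v j = if j == i then v else f j.
Proof. by []. Qed.

Lemma init0 A B S : init_mem A B S 0 = size A. Proof. by []. Qed.
Lemma init1 A B S : init_mem A B S 1 = size B. Proof. by []. Qed.
Lemma init2 A B S : init_mem A B S 2 = size S. Proof. by []. Qed.

Arguments upd f i v j /.
Lemma conseqR s K Q1 Q2 : Run s K Q1 -> (forall s', Q1 s' -> Q2 s') -> Run s K Q2.
Proof. by case=> n [Hn HQ] H; exists n; split => //; apply: H. Qed.

Ltac dec := repeat match goal with
  | |- context[(?a == ?b)] =>
      (have -> : (a == b) = false by apply/eqP; lia) ||
      (have -> : (a == b) = true by apply/eqP; lia)
  end.

Ltac st := apply stepR; unfold step, fetch, prog; simpl; rewrite ?init0 ?init1 ?init2.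


Definition Consts (A B S : seq nat) (r : nat -> nat) :=
  r 0 = 0 /\ r 1 = size A /\ r 2 = size B /\ r 3 = size S /\
  r 4 = 3 + size A + size B + size S /\
  r 5 = 4 + size A + size B + size S + size S /\
  r 6 = 5 + size A + size B + size S + size S + size S /\
  r 7 = 1 /\ r 16 = 3 + size A /\ r 17 = 3 + size A + size B.

Ltac rr := repeat match goal with
  | H : ?r ?n = _ |- context[?r ?n] => is_var r; rewrite H
  end.

Ltac stt := st; rr.

Lemma phase0 A B S : Run (init_state A B S) 17 (fun s => pc s = 17 /\
  Consts A B S (regs s) /\ regs s 8 = size S /\ regs s 9 = 0 /\ regs s 10 = 0 /\
  memory s = init_mem A B S).
Proof.
rewrite /init_state.
do 17 st.
apply: doneR; rewrite /Consts /=; repeat split => //; lia.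
Qed.


Definition NN (A B S : seq nat) := 3 + size A + size B + size S.

Lemma initA A B S i u : i = 3 + u -> u < size A -> init_mem A B S i = nth 0 A u.
Proof.
move=> -> Hu; rewrite /init_mem /=.
by rewrite addKn nth_cat Hu.
Qed.

Lemma initB A B S i u : i = 3 + size A + u -> u < size B -> init_mem A B S i = nth 0 B u.
Proof.
move=> -> Hu; rewrite /init_mem /=.
have -> : 3 + size A + u - 3 = size A + u by lia.
by rewrite nth_cat ltnNge leq_addr /= addKn nth_cat Hu.
Qed.

Lemma initS A B S i u : i = 3 + size A + size B + u -> init_mem A B S i = nth 0 S u.
Proof.
move=> ->; rewrite /init_mem /=.
have -> : 3 + size A + size B + u - 3 = size A + (size B + u) by lia.
rewrite nth_cat ltnNge leq_addr /= addKn nth_cat ltnNge leq_addr /= addKn //.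
Qed.

Lemma initHi A B S i : NN A B S <= i -> init_mem A B S i = 0.
Proof.
rewrite /NN => H; rewrite /init_mem.
have -> : (i == 0) = false by apply/eqP; lia.
have -> : (i == 1) = false by apply/eqP; lia.
have -> : (i == 2) = false by apply/eqP; lia.
rewrite nth_default // !size_cat; lia.
Qed.

Definition Mlow A B S (m : nat -> nat) := forall i, i < NN A B S -> m i = init_mem A B S i.

Lemma readA A B S m i u : Mlow A B S m -> i = 3 + u -> u < size A -> m i = nth 0 A u.
Proof. move=> H Hi Hu; rewrite H; [exact: initA Hi Hu| rewrite /NN; lia]. Qed.
Lemma readB A B S m i u : Mlow A B S m -> i = 3 + size A + u -> u < size B -> m i = nth 0 B u.
Proof. move=> H Hi Hu; rewrite H; [exact: initB Hi Hu| rewrite /NN; lia]. Qed.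
Lemma readS A B S m i u : Mlow A B S m -> i = 3 + size A + size B + u -> u < size S -> m i = nth 0 S u.
Proof. move=> H Hi Hu; rewrite H; [exact: initS _ _ Hi| rewrite /NN; lia]. Qed.

Lemma seg1A A B S r m t x y : Consts A B S r -> r 8 = t.+1 -> r 9 = x -> r 10 = y ->
  t < size S -> Mlow A B S m ->
  Run (State 17 r m) 12 (fun s => pc s = 29 /\ Consts A B S (regs s) /\ regs s 8 = t /\
    regs s 9 = x + ((x < size A) && (nth 0 A (size A - x.+1) == nth 0 S t)) /\
    regs s 10 = y /\ regs s 13 = nth 0 S t /\ memory s = m).
Proof.
move=> [R0 [R1 [R2 [R3 [R4 [R5 [R6 [R7 [R16 R17]]]]]]]]] R8 R9 R10 Ht Hm.
do 4 (st; rr).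
rewrite (readS (u:=t) Hm); [|lia|lia].
st; rr.
case Hxa: (x < size A).
  st; rr. st; rr. st; rr. st; rr.
  rewrite (readA (u:=size A - x.+1) Hm); [|lia|lia].
  st; rr.
  case He: (nth 0 A (size A - x.+1) == nth 0 S t).
    st; rr. st; rr.
    apply: doneR; rewrite /Consts /=; repeat split => //; lia.
  st; rr.
  apply: doneR; rewrite /Consts /=; repeat split => //; lia.
st; rr.
apply: doneR; rewrite /Consts /=; repeat split => //; lia.
Qed.

Lemma seg1B A B S r m t x y c : Consts A B S r -> r 8 = t -> r 9 = x -> r 10 = y ->
  r 13 = c -> Mlow A B S m ->
  Run (State 29 r m) 8 (fun s => pc s = 37 /\ Consts A B S (regs s) /\ regs s 8 = t /\
    regs s 9 = x /\
    regs s 10 = y + ((y < size B) && (nth 0 B (size B - y.+1) == c)) /\ memory s = m).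
Proof.
move=> [R0 [R1 [R2 [R3 [R4 [R5 [R6 [R7 [R16 R17]]]]]]]]] R8 R9 R10 R13 Hm.
st; rr.
case Hyb: (y < size B).
  st; rr. st; rr. st; rr. st; rr.
  rewrite (readB (u:=size B - y.+1) Hm); [|lia|lia].
  st; rr.
  case He: (nth 0 B (size B - y.+1) == c).
    st; rr. st; rr.
    apply: doneR; rewrite /Consts /=; repeat split => //; lia.
  st; rr.
  apply: doneR; rewrite /Consts /=; repeat split => //; lia.
st; rr.
apply: doneR; rewrite /Consts /=; repeat split => //; lia.
Qed.

Lemma seg1C A B S r m t x y : Consts A B S r -> r 8 = t -> r 9 = x -> r 10 = y ->
  Run (State 37 r m) 5 (fun s => pc s = 17 /\ Consts A B S (regs s) /\ regs s 8 = t /\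
    regs s 9 = x /\ regs s 10 = y /\
    memory s = upd (upd m (3 + size A + size B + size S + t) x)
                   (4 + size A + size B + size S + size S + t) y).
Proof.
move=> [R0 [R1 [R2 [R3 [R4 [R5 [R6 [R7 [R16 R17]]]]]]]]] R8 R9 R10.
do 5 (st; rr).
apply: doneR; rewrite /Consts /=; repeat split => //; lia.
Qed.

Definition M1 A B S (m : nat -> nat) t := Mlow A B S m /\
  forall u, t <= u <= size S ->
    m (3 + size A + size B + size S + u) = gs A (drop u S) /\
    m (4 + size A + size B + size S + size S + u) = gs B (drop u S).

Definition Inv1 A B S t s := pc s = 17 /\ Consts A B S (regs s) /\ regs s 8 = t /\
  regs s 9 = gs A (drop t S) /\ regs s 10 = gs B (drop t S) /\
  M1 A B S (memory s) t /\ t <= size S.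

Lemma body1 A B S t s : Inv1 A B S t.+1 s -> Run s 25 (Inv1 A B S t).
Proof.
case: s => p r m [/= -> [HC [R8 [R9 [R10 [[Hm HM] Ht]]]]]].
apply: (seqR (K1 := 12) (seg1A HC R8 R9 R10 Ht Hm)).
case=> p1 r1 m1 /= [-> [HC1 [R81 [R91 [R101 [R131 ->]]]]]].
apply: (seqR (K1 := 8) (seg1B HC1 R81 R91 R101 R131 Hm)).
case=> p2 r2 m2 /= [-> [HC2 [R82 [R92 [R102 ->]]]]].
apply: (conseqR (@seg1C A B S r2 m t _ _ HC2 R82 R92 R102)).
case=> p3 r3 m3 /= [-> [HC3 [R83 [R93 [R103 ->]]]]].
have Hd : drop t S = nth 0 S t :: drop t.+1 S by rewrite (drop_nth 0).
rewrite /Inv1 /=; split => //; split => //; split => //.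
split; first by rewrite R93 Hd gs_cons.
split; first by rewrite R103 Hd gs_cons.
split; last lia.
split.
  move=> i Hi /=; rewrite /NN in Hi; dec; exact: Hm.
move=> u Hu /=.
case: (ltnP t u) => Htu.
  have [E1 E2] := HM u (ltac:(lia)).
  dec; by rewrite E1 E2.
have E : u = t by lia.
subst u; dec.
by rewrite Hd !gs_cons.
Qed.

Lemma loop1 A B S t s : Inv1 A B S t s ->
  Run s (25 * t + 1) (fun s => pc s = 42 /\ Consts A B S (regs s) /\ M1 A B S (memory s) 0).
Proof.
elim: t s => [|t IH] s.
  case: s => p r m [/= -> [HC [R8 [_ [_ [HM _]]]]]].
  st; rewrite R8 /=.
  by apply: doneR.
move=> H.
apply: (weakR (K := 25 + (25 * t + 1))); first lia.
apply: (seqR (body1 H)) => s' H'.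
exact: IH.
Qed.

Lemma readRA A B S m i u : M1 A B S m 0 -> i = 3 + size A + size B + size S + u ->
  u <= size S -> m i = gs A (drop u S).
Proof. by move=> [_ H] -> Hu; case: (H u (ltac:(lia))). Qed.
Lemma readRB A B S m i u : M1 A B S m 0 -> i = 4 + size A + size B + size S + size S + u ->
  u <= size S -> m i = gs B (drop u S).
Proof. by move=> [_ H] -> Hu; case: (H u (ltac:(lia))). Qed.

Lemma segD A B S r m k i j L : Consts A B S r -> r 8 = k -> r 9 = i -> r 10 = j ->
  r 11 = L -> k < size S -> M1 A B S m 0 ->
  Run (State 46 r m) 14 (fun s =>
    pc s = (if (gs A (drop k.+1 S) + i < size A) || (gs B (drop k.+1 S) + j < size B)
            then 61 else 81) /\
    Consts A B S (regs s) /\ regs s 8 = k /\ regs s 9 = i /\ regs s 10 = j /\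
    regs s 11 = L /\ memory s = m).
Proof.
move=> [R0 [R1 [R2 [R3 [R4 [R5 [R6 [R7 [R16 R17]]]]]]]]] R8 R9 R10 R11 Hk Hm.
st; rr. rewrite Hk /=.
do 4 (st; rr).
rewrite (readRA (u := k.+1) Hm); [|lia|lia].
do 2 (st; rr).
case Ha: (gs A (drop k.+1 S) + i < size A).
  st; rr. st; rr.
  apply: doneR; rewrite /Consts /=; repeat split => //; lia.
st; rr.
do 3 (st; rr).
rewrite (readRB (u := k.+1) Hm); [|lia|lia].
do 2 (st; rr).
case Hb: (gs B (drop k.+1 S) + j < size B).
  st; rr.
  apply: doneR; rewrite /Consts /=; repeat split => //; lia.
st; rr.
apply: doneR; rewrite /Consts /=; repeat split => //; lia.
Qed.

Lemma segK A B S r m k i j L : Consts A B S r -> r 8 = k -> r 9 = i -> r 10 = j ->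
  r 11 = L -> k < size S -> Mlow A B S m ->
  Run (State 61 r m) 5 (fun s => pc s = 66 /\
    Consts A B S (regs s) /\ regs s 8 = k /\ regs s 9 = i /\ regs s 10 = j /\
    regs s 11 = L + 1 /\ regs s 13 = nth 0 S k /\
    memory s = upd m (5 + size A + size B + size S + size S + size S + L) (nth 0 S k)).
Proof.
move=> [R0 [R1 [R2 [R3 [R4 [R5 [R6 [R7 [R16 R17]]]]]]]]] R8 R9 R10 R11 Hk Hm.
do 2 (st; rr).
rewrite (readS (u := k) Hm); [|lia|lia].
do 3 (st; rr).
apply: doneR; rewrite /Consts /=; repeat split => //; lia.
Qed.

Lemma segUA A B S r m k i j L c : Consts A B S r -> r 8 = k -> r 9 = i -> r 10 = j ->
  r 11 = L -> r 13 = c -> Mlow A B S m ->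
  Run (State 66 r m) 8 (fun s => pc s = 74 /\
    Consts A B S (regs s) /\ regs s 8 = k /\
    regs s 9 = i + ((i < size A) && (nth 0 A i == c)) /\ regs s 10 = j /\
    regs s 11 = L /\ regs s 13 = c /\ memory s = m).
Proof.
move=> [R0 [R1 [R2 [R3 [R4 [R5 [R6 [R7 [R16 R17]]]]]]]]] R8 R9 R10 R11 R13 Hm.
st; rr.
case Ha: (i < size A).
  do 4 (st; rr).
  rewrite (readA (u := i) Hm); [|lia|lia].
  st; rr.
  case He: (nth 0 A i == c).
    do 2 (st; rr).
    apply: doneR; rewrite /Consts /=; repeat split => //; lia.
  st; rr.
  apply: doneR; rewrite /Consts /=; repeat split => //; lia.
st; rr.
apply: doneR; rewrite /Consts /=; repeat split => //; lia.
Qed.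

Lemma segUB A B S r m k i j L c : Consts A B S r -> r 8 = k -> r 9 = i -> r 10 = j ->
  r 11 = L -> r 13 = c -> Mlow A B S m ->
  Run (State 74 r m) 7 (fun s => pc s = 81 /\
    Consts A B S (regs s) /\ regs s 8 = k /\ regs s 9 = i /\
    regs s 10 = j + ((j < size B) && (nth 0 B j == c)) /\
    regs s 11 = L /\ memory s = m).
Proof.
move=> [R0 [R1 [R2 [R3 [R4 [R5 [R6 [R7 [R16 R17]]]]]]]]] R8 R9 R10 R11 R13 Hm.
st; rr.
case Ha: (j < size B).
  do 3 (st; rr).
  rewrite (readB (u := j) Hm); [|lia|lia].
  st; rr.
  case He: (nth 0 B j == c).
    do 2 (st; rr).
    apply: doneR; rewrite /Consts /=; repeat split => //; lia.
  st; rr.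
  apply: doneR; rewrite /Consts /=; repeat split => //; lia.
st; rr.
apply: doneR; rewrite /Consts /=; repeat split => //; lia.
Qed.

Lemma segN A B S r m k i j L : Consts A B S r -> r 8 = k -> r 9 = i -> r 10 = j ->
  r 11 = L ->
  Run (State 81 r m) 2 (fun s => pc s = 46 /\
    Consts A B S (regs s) /\ regs s 8 = k.+1 /\ regs s 9 = i /\ regs s 10 = j /\
    regs s 11 = L /\ memory s = m).
Proof.
move=> [R0 [R1 [R2 [R3 [R4 [R5 [R6 [R7 [R16 R17]]]]]]]]] R8 R9 R10 R11.
do 2 (st; rr).
apply: doneR; rewrite /Consts /=; repeat split => //; lia.
Qed.

Definition M2 A B S (m : nat -> nat) (P : seq nat) := M1 A B S m 0 /\
  forall u, u < size P ->
    m (5 + size A + size B + size S + size S + size S + u) = nth 0 P u.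

Definition Inv2 A B S k s := pc s = 46 /\ Consts A B S (regs s) /\ regs s 8 = k /\
  regs s 9 = gp A (pref A B [::] S k) /\ regs s 10 = gp B (pref A B [::] S k) /\
  regs s 11 = size (pref A B [::] S k) /\ M2 A B S (memory s) (pref A B [::] S k) /\
  k <= size S.

Lemma body2 A B S k s : Inv2 A B S k s -> k < size S -> Run s 36 (Inv2 A B S k.+1).
Proof.
case: s => p r m [/= -> [HC [R8 [R9 [R10 [R11 [[HM1 HO] _]]]]]]] Hk.
set P := pref A B [::] S k in R9 R10 R11 HO.
have HP : pref A B [::] S k.+1 = stepA A B P (nth 0 S k) (drop k.+1 S) by rewrite pref_S.
have Ecs : common_supersequence A B (P ++ drop k.+1 S) =
  ~~ ((gs A (drop k.+1 S) + gp A P < size A) || (gs B (drop k.+1 S) + gp B P < size B)).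
  by rewrite /common_supersequence !subseq_catE negb_or -!leqNgt
     [gs A _ + _]addnC [gs B _ + _]addnC.
apply: (seqR (K1 := 14) (segD HC R8 R9 R10 R11 Hk HM1)).
case=> p1 r1 m1 /= [-> [HC1 [R81 [R91 [R101 [R111 ->]]]]]].
case Hkeep: ((gs A (drop k.+1 S) + gp A P < size A) || (gs B (drop k.+1 S) + gp B P < size B)).
  have HM1' := HM1; case: HM1' => Hlow _.
  apply: (seqR (K1 := 5) (segK HC1 R81 R91 R101 R111 Hk Hlow)).
  case=> p2 r2 m2 /= [-> [HC2 [R82 [R92 [R102 [R112 [R132 ->]]]]]]].
  set m' := upd m _ _.
  have Hlow' : Mlow A B S m'.
    move=> i Hi; rewrite /m' /=; rewrite /NN in Hi; dec; exact: Hlow.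
  apply: (seqR (K1 := 8) (segUA HC2 R82 R92 R102 R112 R132 Hlow')).
  case=> p3 r3 m3 /= [-> [HC3 [R83 [R93 [R103 [R113 [R133 ->]]]]]]].
  apply: (seqR (K1 := 7) (segUB HC3 R83 R93 R103 R113 R133 Hlow')).
  case=> p4 r4 m4 /= [-> [HC4 [R84 [R94 [R104 [R114 ->]]]]]].
  apply: (conseqR (@segN A B S r4 m' k _ _ _ HC4 R84 R94 R104 R114)).
  case=> p5 r5 m5 /= [-> [HC5 [R85 [R95 [R105 [R115 ->]]]]]].
  have HP' : pref A B [::] S k.+1 = rcons P (nth 0 S k) by rewrite HP /stepA Ecs Hkeep.
  rewrite /Inv2 HP' /=; do 3 (split => //).
  split; first by rewrite R95 gp_rcons.
  split; first by rewrite R105 gp_rcons.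
  split; first by rewrite R115 size_rcons addn1.
  split; last lia.
  split.
    split; first exact: Hlow'.
    move=> u Hu; rewrite /m' /=; dec; case: HM1 => _ H; exact: H.
  move=> u; rewrite size_rcons ltnS leq_eqVlt => /orP [/eqP Eu|Hu].
    rewrite /m' /= Eu; dec.
    by rewrite nth_rcons ltnn eqxx.
  rewrite /m' /=; dec.
  by rewrite nth_rcons Hu HO.
apply: (weakR (K := 2)) => //.
apply: (conseqR (@segN A B S r1 m k _ _ _ HC1 R81 R91 R101 R111)).
case=> p5 r5 m5 /= [-> [HC5 [R85 [R95 [R105 [R115 ->]]]]]].
have HP' : pref A B [::] S k.+1 = P by rewrite HP /stepA Ecs Hkeep.
rewrite /Inv2 HP'; do 7 (split => //); lia.
Qed.

Lemma loop2 A B S d k s : Inv2 A B S k s -> size S - k = d ->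
  Run s (36 * d + 2) (fun s => pc s = 83 /\ Consts A B S (regs s) /\
    regs s 11 = size (alg A B [::] S) /\ M2 A B S (memory s) (alg A B [::] S)).
Proof.
elim: d k s => [|d IH] k s H Hd.
  have Ek : k = size S by case: H => [_ [_ [_ [_ [_ [_ [_ ?]]]]]]]; lia.
  subst k; move: H; rewrite /Inv2 pref_size.
  case: s => p r m [/= -> [HC [R8 [R9 [R10 [R11 [HM _]]]]]]].
  have R3 : r 3 = size S by case: HC => [_ [_ [_ [? _]]]].
  st; rr; rewrite ltnn /=.
  st; rr.
  by apply: doneR.
have Hk : k < size S by lia.
apply: (weakR (K := 36 + (36 * d + 2))); first lia.
apply: (seqR (body2 H Hk)) => s' H'.
apply: IH H' _; lia.
Qed.

Definition Inv3 A B S (C : seq nat) t s := pc s = 84 /\ Consts A B S (regs s) /\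
  regs s 8 = t /\ regs s 11 = size C /\ t <= size C /\ size C <= size S /\
  (forall u, u < size C ->
     memory s (5 + size A + size B + size S + size S + size S + u) = nth 0 C u) /\
  (forall u, u < t -> memory s (1 + u) = nth 0 C u).

Lemma loop3 A B S C d t s : Inv3 A B S C t s -> size C - t = d ->
  Run s (8 * d + 4) (fun s => pc s = 94 /\ memory s 0 = size C /\
    forall u, u < size C -> memory s (1 + u) = nth 0 C u).
Proof.
elim: d t s => [|d IH] t s.
  case: s => p r m [/= -> [HC [R8 [R11 [Ht [HCS [HO H1]]]]]]] Hd.
  have Et : t = size C by lia.
  subst t.
  move: HC => [R0 [R1 [R2 [R3 [R4 [R5 [R6 [R7 [R16 R17]]]]]]]]].
  st; rr; rewrite ltnn /=.
  do 3 (st; rr).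
  apply: doneR => /=; split => //; split => //.
  move=> u Hu; apply: H1; lia.
case: s => p r m [/= -> [HC [R8 [R11 [Ht [HCS [HO H1]]]]]]] Hd.
have Htl : t < size C by lia.
move: (HC) => [R0 [R1 [R2 [R3 [R4 [R5 [R6 [R7 [R16 R17]]]]]]]]].
apply: (weakR (K := 8 + (8 * d + 4))); first lia.
apply: (seqR (K1 := 8) (Q1 := Inv3 A B S C t.+1)); last first.
  move=> s' H'; apply: IH H' _; lia.
st; rr; rewrite Htl /=.
do 3 (st; rr).
rewrite HO; last lia.
do 4 (st; rr).
apply: doneR; rewrite /Inv3 /Consts /=; do 6 (split; first by lia).
split.
  move=> u Hu; dec; exact: HO.
move=> u Hu; rewrite ltnS leq_eqVlt in Hu; case/orP: Hu => [/eqP ->|Hu].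
  by dec.
dec; apply: H1; lia.
Qed.

Lemma entry1 A B S s : (pc s = 17 /\ Consts A B S (regs s) /\ regs s 8 = size S /\
  regs s 9 = 0 /\ regs s 10 = 0 /\ memory s = init_mem A B S) -> Inv1 A B S (size S) s.
Proof.
case=> [Hp [HC [R8 [R9 [R10 Hm]]]]].
rewrite /Inv1 drop_size /gs /= R9 R10 Hm; do 5 (split => //).
split => //; split => //.
move=> u Hu; have -> : u = size S by lia.
rewrite drop_size !initHi // /NN; lia.
Qed.

Lemma entry2 A B S s : (pc s = 42 /\ Consts A B S (regs s) /\ M1 A B S (memory s) 0) ->
  Run s 4 (Inv2 A B S 0).
Proof.
case: s => p r m [/= -> [HC HM]].
move: (HC) => [R0 [R1 [R2 [R3 [R4 [R5 [R6 [R7 [R16 R17]]]]]]]]].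
do 4 (st; rr).
apply: doneR; rewrite /Inv2 /=; split => //.
Qed.

Lemma entry3 A B S s : (pc s = 83 /\ Consts A B S (regs s) /\
    regs s 11 = size (alg A B [::] S) /\ M2 A B S (memory s) (alg A B [::] S)) ->
  size (alg A B [::] S) <= size S ->
  Run s 1 (Inv3 A B S (alg A B [::] S) 0).
Proof.
case: s => p r m [/= -> [HC [R11 [_ HO]]]] HCS.
move: (HC) => [R0 [R1 [R2 [R3 [R4 [R5 [R6 [R7 [R16 R17]]]]]]]]].
st; rr.
apply: doneR; rewrite /Inv3 /=; split => //.
Qed.

Theorem mainTheorem4 :
  exists (p : seq instr) (c : nat),
    forall A B S : seq nat, subseq A S -> subseq B S ->
      exists n : nat,
        n <= c * (size S + size A + size B) + c /\
        let s := iter n (step p) (init_state A B S) in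
        halted p s /\
        minimal_common_supersequence A B (output (memory s)) /\
        subseq (output (memory s)) S.
Proof.
exists prog, 100 => A B S HA HB.
have [Hmin Hsub] := alg_correct HA HB.
set C := alg A B [::] S in Hmin Hsub.
have HCS : size C <= size S by apply: size_subseq.
have HR : Run (init_state A B S)
   (17 + ((25 * size S + 1) + (4 + ((36 * (size S - 0) + 2) + (1 + (8 * (size C - 0) + 4))))))
   (fun s => pc s = 94 /\ memory s 0 = size C /\
      forall u, u < size C -> memory s (1 + u) = nth 0 C u).
  apply: (seqR (phase0 A B S)) => s0 H0.
  apply: (seqR (loop1 (entry1 H0))) => s1 H1.
  apply: (seqR (entry2 H1)) => s2 H2.
  apply: (seqR (loop2 H2 erefl)) => s3 H3.
  apply: (seqR (entry3 H3 HCS)) => s4 H4.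
  exact: (loop3 H4 erefl).
case: HR => n [Hn [Hpc [H0 H1]]].
exists n; split; first lia.
have Hout : output (memory (iter n (step prog) (init_state A B S))) = C.
  rewrite /output H0.
  apply: (@eq_from_nth _ 0); first by rewrite size_mkseq.
  move=> i; rewrite size_mkseq => Hi.
  by rewrite nth_mkseq // -H1 // add1n.
rewrite /= Hout; split => //.
by rewrite /halted /fetch Hpc.
Qed.
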